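(* For every integer $n\ge 3$, let $\kappa(K_n\times K_n)$ denote the largest integer $k$ such that $K_n\times K_n$ has a weak $k$-resolving set. Then $$\kappa(K_n\times K_n)=\begin{cases}6, & n=3;\\ 2n+2, & n\ge 4.\end{cases}$$
   Context: $K_n\times K_n$ denotes the direct product of two complete graphs on $n$ vertices: its vertex set is $V=[n]\times[n]$ (where $[n]=\{1,\dots,n\}$), and $(i,j)$ is adjacent to $(i',j')$ if and only if $i\neq i'$ and $j\ne j'$. For a connected graph $G$ with distance $d_G$, vertices $x,y,z$ and a set $S\subseteq V(G)$, let $\Delta_z(x,y)=|d_G(x,z)-d_G(y,z)|$ and $\Delta_S(x,y)=\sum_{z\in S}\Delta_z(x,y)$. For an integer $k\ge1$, a set $S\subseteq V(G)$ is a weak $k$-resolving set of $G$ if $\Delta_S(x,y)\ge k$ for every two distinct vertices $x,y\in V(G)$. *)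

(* Defs.v *)
From mathcomp Require Import all_boot.
Set Implicit Arguments. Unset Strict Implicit. Unset Printing Implicit Defensive.

Section Graphs.
Variable T : finType.
Variable e : rel T.

Fixpoint ball (k : nat) (x : T) : {set T} :=
  match k with
  | 0 => [set x]
  | k'.+1 => ball k' x :|: [set z | [exists w in ball k' x, e w z]]
  end.

(* shortest-path distance: least k with y in ball k x
   (equals #|T| if y is unreachable; irrelevant for connected graphs) *)
Definition gdist (x y : T) : nat :=
  find (fun k => y \in ball k x) (iota 0 #|T|).

Definition absdiff (a b : nat) : nat := (a - b) + (b - a).

Definition Delta_z (z x y : T) : nat := absdiff (gdist x z) (gdist y z).

Definition Delta_S (S : {set T}) (x y : T) : nat := \sum_(z in S) Delta_z z x y.

Definition weak_k_resolving (k : nat) (S : {set T}) : Prop :=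
  forall x y : T, x != y -> k <= Delta_S S x y.

Definition connected_graph : Prop := forall x y : T, y \in ball #|T| x.
End Graphs.

Definition KnKn_adj (n : nat) : rel ('I_n * 'I_n) :=
  fun u v => (u.1 != v.1) && (u.2 != v.2).
Arguments KnKn_adj n : clear implicits.

(* Main.v *)
Require Import Defs.
From mathcomp Require Import all_boot zify.
Set Implicit Arguments. Unset Strict Implicit. Unset Printing Implicit Defensive.

Lemma other n (hn : 2 < n) (b d : 'I_n) : exists j : 'I_n, (j != b) && (j != d).
Proof.
have : 0 < #|~: [set b; d]|.
  have := cardsC [set b; d]; rewrite card_ord cards2.
  case: (b != d) => /=; lia.
case/card_gt0P => j; rewrite !inE negb_or => h; by exists j.
Qed.

Lemma gdistE n (hn : 2 < n) (x y : 'I_n * 'I_n) :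
  gdist (KnKn_adj n) x y = if x == y then 0 else if KnKn_adj n x y then 1 else 2.
Proof.
have b0 : (y \in ball (KnKn_adj n) 0 x) = (x == y) by rewrite /= in_set1 eq_sym.
have b1 : (y \in ball (KnKn_adj n) 1 x) = (x == y) || KnKn_adj n x y.
  rewrite /= in_setU in_set1 eq_sym inE; congr orb.
  apply/existsP/idP => [[w /andP[/set1P -> //]]|h]; by exists x; rewrite in_set1 eqxx.
have b2 : (y \in ball (KnKn_adj n) 2 x).
  have [i /andP[i1 i2]] := other hn x.1 y.1.
  have [j /andP[j1 j2]] := other hn x.2 y.2.
  rewrite [ball _ 2 _]/= in_setU inE; apply/orP; right; apply/existsP; exists (i, j).
  rewrite -/(ball (KnKn_adj n) 1 x) in_setU.
  apply/andP; split; last by rewrite /KnKn_adj /= i2 j2.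
  apply/orP; right; rewrite inE; apply/existsP; exists x; rewrite in_set1 eqxx /KnKn_adj /=.
  by rewrite !(eq_sym _ i) !(eq_sym _ j) i1 j1.
rewrite /gdist card_prod card_ord.
have [m ->] : exists m, n * n = m.+3 by exists (n * n - 3); nia.
rewrite [iota _ _]/= /find -/(find _ _) b0 b1 -[ball _ 2 _]/(ball (KnKn_adj n) 2 x) b2.
by case: (x == y); case: (KnKn_adj n x y).
Qed.

Ltac norm_eqs := rewrite /KnKn_adj /= ?xpair_eqE /=.

Lemma ptRow n (hn : 2 < n) (a b d : 'I_n) (z : 'I_n * 'I_n) : b != d ->
  Delta_z (KnKn_adj n) z (a, b) (a, d) =
  (z.2 == b) + (z.2 == d) + (z == (a, b)) + (z == (a, d)).
Proof.
case: z => i j hbd; rewrite /Delta_z /absdiff !gdistE //; norm_eqs.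
rewrite !(eq_sym a) !(eq_sym b) !(eq_sym d).
have hdb : (d == b) = false by rewrite eq_sym (negbTE hbd).
case: (i =P a) => [e1|/eqP hia]; rewrite ?e1; rewrite ?eqxx ?(negbTE hia) /=;
case: (j =P b) => [e2|/eqP hjb]; rewrite ?e2; rewrite ?eqxx ?(negbTE hjb) ?(negbTE hbd) //=;
case: (j =P d) => [e3|/eqP hjd]; rewrite ?e3; rewrite ?eqxx ?(negbTE hjd) ?hdb //=.
Qed.

Lemma ptCol n (hn : 2 < n) (a b c : 'I_n) (z : 'I_n * 'I_n) : a != c ->
  Delta_z (KnKn_adj n) z (a, b) (c, b) =
  (z.1 == a) + (z.1 == c) + (z == (a, b)) + (z == (c, b)).
Proof.
case: z => i j hac; rewrite /Delta_z /absdiff !gdistE //; norm_eqs.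
rewrite !(eq_sym a) !(eq_sym b) !(eq_sym c).
have hca : (c == a) = false by rewrite eq_sym (negbTE hac).
case: (j =P b) => [e4|/eqP hjb]; rewrite ?e4; rewrite ?eqxx ?(negbTE hjb) /=;
case: (i =P a) => [e5|/eqP hia]; rewrite ?e5; rewrite ?eqxx ?(negbTE hia) ?(negbTE hac) //=;
case: (i =P c) => [e6|/eqP hic]; rewrite ?e6; rewrite ?eqxx ?(negbTE hic) ?hca //=.
Qed.

Lemma ptDiag n (hn : 2 < n) (a b c d : 'I_n) (z : 'I_n * 'I_n) : a != c -> b != d ->
  Delta_z (KnKn_adj n) z (a, b) (c, d) + 2 * (z == (a, d)) + 2 * (z == (c, b))
   + (z == (a, b)) + (z == (c, d)) =
  (z.1 == a) + (z.1 == c) + (z.2 == b) + (z.2 == d).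
Proof.
case: z => i j hac hbd; rewrite /Delta_z /absdiff !gdistE //; norm_eqs.
rewrite !(eq_sym a) !(eq_sym b) !(eq_sym c) !(eq_sym d).
have hca : (c == a) = false by rewrite eq_sym (negbTE hac).
have hdb : (d == b) = false by rewrite eq_sym (negbTE hbd).
case: (i =P a) => [e7|/eqP hia]; rewrite ?e7; rewrite ?eqxx ?(negbTE hia) ?(negbTE hac) /=;
case: (i =P c) => [e8|/eqP hic]; rewrite ?e8; rewrite ?eqxx ?(negbTE hic) ?hca //=;
case: (j =P b) => [e9|/eqP hjb]; rewrite ?e9; rewrite ?eqxx ?(negbTE hjb) ?(negbTE hbd) //=;
case: (j =P d) => [e10|/eqP hjd]; rewrite ?e10; rewrite ?eqxx ?(negbTE hjd) ?hdb //=.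
Qed.

Lemma sumx (T : finType) (x : T) : \sum_z (z == x : nat) = 1.
Proof. by rewrite (bigD1 x) //= eqxx big1 // => z /negbTE ->. Qed.

Lemma sum2 n (b : 'I_n) : \sum_(z : 'I_n * 'I_n) (z.2 == b : nat) = n.
Proof.
rewrite -(pair_bigA _ (fun (i j : 'I_n) => (j == b : nat))) /=.
under eq_bigr do rewrite sumx.
by rewrite sum_nat_const card_ord muln1.
Qed.

Lemma sum1 n (a : 'I_n) : \sum_(z : 'I_n * 'I_n) (z.1 == a : nat) = n.
Proof.
rewrite -(pair_bigA _ (fun (i j : 'I_n) => (i == a : nat))) /=.
under eq_bigr do rewrite sum_nat_const card_ord.
rewrite -big_distrr /= sumx; by rewrite muln1.
Qed.

Lemma DT n (x y : 'I_n * 'I_n) :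
  Delta_S (KnKn_adj n) [set: 'I_n * 'I_n] x y = \sum_z Delta_z (KnKn_adj n) z x y.
Proof. by rewrite /Delta_S; apply: eq_bigl => z; rewrite inE. Qed.

Lemma rowT n (hn : 2 < n) (a b d : 'I_n) : b != d ->
  Delta_S (KnKn_adj n) [set: 'I_n * 'I_n] (a, b) (a, d) = 2 * n + 2.
Proof.
move=> hbd; rewrite DT; under eq_bigr do rewrite ptRow //.
rewrite !big_split /= !sum2 !sumx; lia.
Qed.

Lemma colT n (hn : 2 < n) (a b c : 'I_n) : a != c ->
  Delta_S (KnKn_adj n) [set: 'I_n * 'I_n] (a, b) (c, b) = 2 * n + 2.
Proof.
move=> hac; rewrite DT; under eq_bigr do rewrite ptCol //.
rewrite !big_split /= !sum1 !sumx; lia.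
Qed.

Lemma sum5 (T : finType) (A B C D E : T -> nat) :
  \sum_z (A z + 2 * B z + 2 * C z + D z + E z) =
  \sum_z A z + 2 * \sum_z B z + 2 * \sum_z C z + \sum_z D z + \sum_z E z.
Proof. have z0 : \sum_(z : T) 0 = 0 by rewrite big1.
rewrite !big_split /= z0; lia. Qed.

Lemma sum4 (T : finType) (A B C D : T -> nat) :
  \sum_z (A z + B z + C z + D z) = \sum_z A z + \sum_z B z + \sum_z C z + \sum_z D z.
Proof. by rewrite !big_split. Qed.

Lemma diagT n (hn : 2 < n) (a b c d : 'I_n) : a != c -> b != d ->
  Delta_S (KnKn_adj n) [set: 'I_n * 'I_n] (a, b) (c, d) + 6 = 4 * n.
Proof.
move=> hac hbd.
have H : \sum_(z : 'I_n * 'I_n) (Delta_z (KnKn_adj n) z (a, b) (c, d) + 2 * (z == (a, d)) + 2 * (z == (c, b))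
   + (z == (a, b)) + (z == (c, d))) =
  \sum_(z : 'I_n * 'I_n) ((z.1 == a) + (z.1 == c) + (z.2 == b) + (z.2 == d)).
  by apply: eq_bigr => z _; apply: ptDiag.
rewrite sum5 sum4 !sum1 !sum2 !sumx -DT in H; lia.
Qed.

Lemma DsubT n (S : {set 'I_n * 'I_n}) x y :
  Delta_S (KnKn_adj n) S x y <= Delta_S (KnKn_adj n) [set: 'I_n * 'I_n] x y.
Proof.
rewrite DT /Delta_S big_mkcond /=; apply: leq_sum => z _; by case: (z \in S).
Qed.

Theorem mainTheorem1 (n : nat) (hn : 3 <= n) :
  let K := if n == 3 then 6 else (2 * n + 2) in
  (exists S : {set 'I_n * 'I_n}, weak_k_resolving (KnKn_adj n) K S) /\
  (forall k : nat, 1 <= k ->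
     (exists S : {set 'I_n * 'I_n}, weak_k_resolving (KnKn_adj n) k S) ->
     k <= K).
Proof.
move=> K; have hn2 : 2 < n by [].
split.
  exists [set: 'I_n * 'I_n] => [[a b] [c d]] hxy.
  case: (eqVneq a c) => [eac|hac].
    subst c; have hbd : b != d by move: hxy; rewrite xpair_eqE eqxx.
    rewrite rowT // /K; case: ifP => _; lia.
  case: (eqVneq b d) => [ebd|hbd].
    subst d; rewrite colT // /K; case: ifP => _; lia.
  have := diagT hn2 hac hbd; rewrite /K; case: (eqVneq n 3) => [e3|n3] /= h; lia.
move=> k _ [S hS].
have h0 : 0 < n by lia.
have h1 : 1 < n by lia.
pose o0 := Ordinal h0; pose o1 := Ordinal h1.
have h01 : o0 != o1 by [].
rewrite /K; case: (eqVneq n 3) => [e3|n3].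
  have := hS (o0, o0) (o1, o1); rewrite xpair_eqE (negbTE h01) => /(_ isT) h.
  have := leq_trans h (DsubT _ _ _); have := diagT hn2 h01 h01; lia.
have := hS (o0, o0) (o0, o1); rewrite xpair_eqE (negbTE h01) andbF => /(_ isT) h.
have := leq_trans h (DsubT _ _ _); rewrite rowT //; lia.
Qed.
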